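(* Let $S$ be a semilattice and $\omega$ a submultiplicative weight on $S$ such that $(S,\omega)$ is flighty. Then $\ell^1_\omega(S)$ is AMNM. (In particular this holds whenever $\omega$ is bounded, and whenever $S$ has finite breadth — e.g. finite width or finite height — for every submultiplicative weight $\omega$.)
   Context: A semilattice is a commutative semigroup in which every element is idempotent. A weight is $\omega:S\to(0,\infty)$, submultiplicative if $\omega(xy)\le\omega(x)\omega(y)$. $\ell^1_\omega(S)$ is the Banach space of $a:S\to\mathbb C$ with $\|a\|=\sum_s|a(s)|\omega(s)<\infty$ with convolution product ($\delta_x*\delta_y=\delta_{xy}$). For $E\subseteq S$, $\langle E\rangle$ is the subsemigroup generated by $E$ and $\langle E\rangle_n=\{x_1\cdots x_n: x_i\in E\}$. The breadth of $S$ is $\sup_{E\subseteq S}\inf\{n:\langle E\rangle_n=\langle E\rangle\}$. For $K>0$ let $W_K=\{x\in S:\omega(x)\le K\}$; $(S,\omega)$ is flighty if for every $K>0$, $\sup\{\omega(y): y\in\langle W_K\rangle\}<\infty$. For a bounded linear map $T$ between Banach algebras, $\operatorname{def}(T)=\sup\{\|T(xy)-T(x)T(y)\|:\|x\|,\|y\|\le1\}$. A Banach algebra $A$ is AMNM if for every $\varepsilon>0$ there is $\delta>0$ such that every $\psi\in A^*$ with $\operatorname{def}(\psi)\le\delta$ is within distance $\varepsilon$ (in $A^*$) of a bounded multiplicative linear functional (possibly $0$). *)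

(* Defs.v *)
From Stdlib Require Import Reals List.
Import ListNotations.
Open Scope R_scope.

Record Cx : Type := mkC { Re : R; Im : R }.
Definition C0 : Cx := mkC 0 0.
Definition Cadd (z w : Cx) : Cx := mkC (Re z + Re w) (Im z + Im w).
Definition Csub (z w : Cx) : Cx := mkC (Re z - Re w) (Im z - Im w).
Definition Cmul (z w : Cx) : Cx :=
  mkC (Re z * Re w - Im z * Im w) (Re z * Im w + Im z * Re w).
Definition Cnorm (z : Cx) : R := sqrt (Re z * Re z + Im z * Im z).

Definition sumR {I : Type} (f : I -> R) (F : list I) : R :=
  fold_right (fun i acc => f i + acc) 0 F.
Definition sumC {I : Type} (f : I -> Cx) (F : list I) : Cx :=
  fold_right (fun i acc => Cadd (f i) acc) C0 F.

(** Unconditional summation of an arbitrary family (net of finite subsets). *)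
Definition Chas_sum {I : Type} (f : I -> Cx) (l : Cx) : Prop :=
  forall eps, 0 < eps -> exists F0 : list I, forall F : list I,
      NoDup F -> incl F0 F -> Cnorm (Csub (sumC f F) l) < eps.

Definition is_semilattice (S : Type) (op : S -> S -> S) : Prop :=
  (forall x y z, op x (op y z) = op (op x y) z) /\
  (forall x y, op x y = op y x) /\
  (forall x, op x x = x).

Definition is_weight {S : Type} (w : S -> R) : Prop := forall s, 0 < w s.

Definition submultiplicative {S : Type} (op : S -> S -> S) (w : S -> R) : Prop :=
  forall x y, w (op x y) <= w x * w y.

Inductive gen {S : Type} (op : S -> S -> S) (E : S -> Prop) : S -> Prop :=
| gen_base : forall x, E x -> gen op E x
| gen_mul : forall x y, gen op E x -> gen op E y -> gen op E (op x y).

Definition W_K {S : Type} (w : S -> R) (K : R) : S -> Prop := fun x => w x <= K.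

Definition flighty {S : Type} (op : S -> S -> S) (w : S -> R) : Prop :=
  forall K, 0 < K -> exists B : R, forall y, gen op (W_K w K) y -> w y <= B.

(** [l1_norm_le w a r] : the norm sum_s |a s| w s is at most r
    (the sum of a nonnegative family is the sup of its finite partial sums). *)
Definition l1_norm_le {S : Type} (w : S -> R) (a : S -> Cx) (r : R) : Prop :=
  forall F : list S, NoDup F -> sumR (fun s => Cnorm (a s) * w s) F <= r.

Definition in_l1 {S : Type} (w : S -> R) (a : S -> Cx) : Prop :=
  exists r, l1_norm_le w a r.

Definition l1 {S : Type} (w : S -> R) : Type := { a : S -> Cx | in_l1 w a }.

(** Convolution: (a*b)(s) = sum_{x y = s} a(x) b(y), i.e. delta_x * delta_y = delta_{xy}. *)
Definition is_conv {S : Type} (op : S -> S -> S) (a b c : S -> Cx) : Prop :=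
  forall s, Chas_sum (fun p : { p : S * S | op (fst p) (snd p) = s } =>
                        Cmul (a (fst (proj1_sig p))) (b (snd (proj1_sig p)))) (c s).

Definition bounded_linear {S : Type} (w : S -> R) (psi : l1 w -> Cx) : Prop :=
  (forall a b c : l1 w,
      (forall s, proj1_sig c s = Cadd (proj1_sig a s) (proj1_sig b s)) ->
      psi c = Cadd (psi a) (psi b)) /\
  (forall (lam : Cx) (a c : l1 w),
      (forall s, proj1_sig c s = Cmul lam (proj1_sig a s)) ->
      psi c = Cmul lam (psi a)) /\
  (exists M : R, forall (a : l1 w) r, l1_norm_le w (proj1_sig a) r ->
      Cnorm (psi a) <= M * r).

Definition defect_le {S : Type} (op : S -> S -> S) (w : S -> R)
  (psi : l1 w -> Cx) (delta : R) : Prop :=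
  forall a b c : l1 w,
    l1_norm_le w (proj1_sig a) 1 -> l1_norm_le w (proj1_sig b) 1 ->
    is_conv op (proj1_sig a) (proj1_sig b) (proj1_sig c) ->
    Cnorm (Csub (psi c) (Cmul (psi a) (psi b))) <= delta.

(** bounded multiplicative linear functional (possibly 0) *)
Definition multiplicative_functional {S : Type} (op : S -> S -> S) (w : S -> R)
  (phi : l1 w -> Cx) : Prop :=
  bounded_linear w phi /\
  (forall a b c : l1 w,
      is_conv op (proj1_sig a) (proj1_sig b) (proj1_sig c) ->
      phi c = Cmul (phi a) (phi b)).

Definition dual_dist_le {S : Type} (w : S -> R) (psi phi : l1 w -> Cx) (eps : R) : Prop :=
  forall a : l1 w, l1_norm_le w (proj1_sig a) 1 ->
    Cnorm (Csub (psi a) (phi a)) <= eps.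

Definition AMNM_l1 {S : Type} (op : S -> S -> S) (w : S -> R) : Prop :=
  forall eps, 0 < eps -> exists delta, 0 < delta /\
    forall psi : l1 w -> Cx, bounded_linear w psi -> defect_le op w psi delta ->
      exists phi : l1 w -> Cx, multiplicative_functional op w phi /\
        dual_dist_le w psi phi eps.

(* Main.v *)
Require Import Defs.
From Stdlib Require Import Reals Lra Lia Psatz List Permutation Classical ClassicalEpsilon ProofIrrelevance FunctionalExtensionality.
Import ListNotations.
Open Scope R_scope.

Definition Cr (r : R) : Cx := mkC r 0.
Definition C1 : Cx := Cr 1.

Lemma Cext z w : Re z = Re w -> Im z = Im w -> z = w.
Proof. destruct z, w; simpl; intros; subst; reflexivity. Qed.

Ltac Csolve := apply Cext; unfold Cadd, Csub, Cmul, Cr, C1, C0; simpl; ring.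

Lemma sqrt_le_sq x y : 0 <= y -> x <= y * y -> sqrt x <= y.
Proof.
  intros Hy Hx. destruct (Rle_dec x 0) as [H|H].
  - rewrite sqrt_neg_0; lra.
  - rewrite <- (sqrt_square y Hy). apply sqrt_le_1_alt; lra.
Qed.

Lemma Cnorm_nonneg z : 0 <= Cnorm z.
Proof. apply sqrt_pos. Qed.

Lemma Cnorm_sq z : Cnorm z * Cnorm z = Re z * Re z + Im z * Im z.
Proof. unfold Cnorm. apply sqrt_sqrt. nra. Qed.

Lemma Re_le z : Rabs (Re z) <= Cnorm z.
Proof.
  unfold Cnorm. rewrite <- sqrt_Rsqr_abs. apply sqrt_le_1_alt. unfold Rsqr. nra.
Qed.

Lemma Im_le z : Rabs (Im z) <= Cnorm z.
Proof.
  unfold Cnorm. rewrite <- sqrt_Rsqr_abs. apply sqrt_le_1_alt. unfold Rsqr. nra.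
Qed.

Lemma Cnorm_le_ReIm z : Cnorm z <= Rabs (Re z) + Rabs (Im z).
Proof.
  unfold Cnorm. apply sqrt_le_sq.
  - pose proof (Rabs_pos (Re z)); pose proof (Rabs_pos (Im z)); lra.
  - pose proof (Rabs_pos (Re z)); pose proof (Rabs_pos (Im z)).
    assert (Rabs (Re z) * Rabs (Re z) = Re z * Re z) by (rewrite <- Rabs_mult; apply Rabs_right; nra).
    assert (Rabs (Im z) * Rabs (Im z) = Im z * Im z) by (rewrite <- Rabs_mult; apply Rabs_right; nra).
    nra.
Qed.

Lemma Cnorm_triangle z w : Cnorm (Cadd z w) <= Cnorm z + Cnorm w.
Proof.
  unfold Cnorm at 1. apply sqrt_le_sq.
  - pose proof (Cnorm_nonneg z); pose proof (Cnorm_nonneg w); lra.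
  - pose proof (Cnorm_sq z); pose proof (Cnorm_sq w).
    pose proof (Cnorm_nonneg z); pose proof (Cnorm_nonneg w).
    destruct z as [a b]; destruct w as [c d]; simpl in *.
    assert (a*c + b*d <= Cnorm (mkC a b) * Cnorm (mkC c d)).
    { destruct (Rle_dec (a*c+b*d) 0). nra.
      apply Rsqr_incr_0_var. unfold Rsqr.
      replace (Cnorm {| Re := a; Im := b |} * Cnorm {| Re := c; Im := d |} *
        (Cnorm {| Re := a; Im := b |} * Cnorm {| Re := c; Im := d |})) with
        ((Cnorm {| Re := a; Im := b |} * Cnorm {| Re := a; Im := b |}) *
         (Cnorm {| Re := c; Im := d |} * Cnorm {| Re := c; Im := d |})) by ring.
      rewrite H, H0. replace ((a * a + b * b) * (c * c + d * d)) with ((a * c + b * d) * (a * c + b * d) + (a*d-b*c)*(a*d-b*c)) by ring. pose proof (Rle_0_sqr (a*d-b*c)). unfold Rsqr in *. lra. apply Rmult_le_pos; assumption. }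
    nra.
Qed.

Lemma Cnorm_mul z w : Cnorm (Cmul z w) = Cnorm z * Cnorm w.
Proof.
  unfold Cnorm. rewrite <- sqrt_mult by nra. f_equal.
  destruct z, w; simpl; ring.
Qed.

Lemma Cnorm_sub_sym z w : Cnorm (Csub z w) = Cnorm (Csub w z).
Proof. unfold Cnorm. f_equal. destruct z, w; simpl; ring. Qed.

Lemma Cnorm_Cr r : Cnorm (Cr r) = Rabs r.
Proof. unfold Cnorm, Cr; simpl. rewrite <- sqrt_Rsqr_abs. f_equal. unfold Rsqr. ring. Qed.

Lemma Cnorm_C0 : Cnorm C0 = 0.
Proof. unfold Cnorm, C0; simpl. replace (0*0+0*0) with 0 by ring. apply sqrt_0. Qed.

Lemma Cnorm_C1 : Cnorm C1 = 1.
Proof. unfold C1. rewrite Cnorm_Cr. apply Rabs_R1. Qed.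

Lemma Cnorm_sub_tri z w v : Cnorm (Csub z v) <= Cnorm (Csub z w) + Cnorm (Csub w v).
Proof.
  replace (Csub z v) with (Cadd (Csub z w) (Csub w v)) by Csolve. apply Cnorm_triangle.
Qed.

Lemma Rabs_m1 : Rabs (-1) = 1.
Proof. rewrite Rabs_left; lra. Qed.

Lemma Cnorm_sub_le z w : Cnorm (Csub z w) <= Cnorm z + Cnorm w.
Proof.
  replace (Csub z w) with (Cadd z (Cmul (Cr (-1)) w)) by Csolve.
  eapply Rle_trans. apply Cnorm_triangle. rewrite Cnorm_mul, Cnorm_Cr.
  rewrite Rabs_m1. lra.
Qed.

Lemma Cnorm_ge_sub z w : Cnorm z - Cnorm w <= Cnorm (Csub z w).
Proof.
  pose proof (Cnorm_sub_tri z C0 w). 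
  replace (Csub z C0) with z in H by Csolve.
  replace (Csub C0 w) with (Cmul (Cr (-1)) w) in H by Csolve.
  rewrite Cnorm_mul, Cnorm_Cr, Rabs_m1 in H.
  pose proof (Cnorm_sub_tri z w C0).
  replace (Csub z C0) with z in H0 by Csolve.
  replace (Csub w C0) with w in H0 by Csolve.
  lra.
Qed.
Definition deq {T : Type} (x y : T) : {x = y} + {x <> y} := excluded_middle_informative (x = y).
Definition memb {T : Type} (F : list T) (x : T) : bool :=
  if in_dec deq x F then true else false.
Definition notin {T : Type} (F : list T) (x : T) : bool := negb (memb F x).

Lemma memb_true {T} (F : list T) x : memb F x = true <-> In x F.
Proof. unfold memb. destruct (in_dec deq x F); split; intros; auto; discriminate. Qed.
Lemma notin_true {T} (F : list T) x : notin F x = true <-> ~ In x F.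
Proof. unfold notin, memb. destruct (in_dec deq x F); simpl; split; intros; auto; try discriminate; contradiction. Qed.

Section Sums.
Context {T : Type}.

Lemma sumR_app (f : T -> R) l1 l2 : sumR f (l1 ++ l2) = sumR f l1 + sumR f l2.
Proof. induction l1; simpl; [ring | rewrite IHl1; ring]. Qed.

Lemma sumC_app (f : T -> Cx) l1 l2 : sumC f (l1 ++ l2) = Cadd (sumC f l1) (sumC f l2).
Proof. induction l1; simpl. Csolve. rewrite IHl1. Csolve. Qed.

Lemma sumR_ext (f g : T -> R) l : (forall x, In x l -> f x = g x) -> sumR f l = sumR g l.
Proof. induction l; simpl; intros; auto. rewrite H, IHl; auto. Qed.

Lemma sumC_ext (f g : T -> Cx) l : (forall x, In x l -> f x = g x) -> sumC f l = sumC g l.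
Proof. induction l; simpl; intros; auto. rewrite H, IHl; auto. Qed.

Lemma sumR_le (f g : T -> R) l : (forall x, In x l -> f x <= g x) -> sumR f l <= sumR g l.
Proof. induction l; simpl; intros. lra. pose proof (H a (or_introl eq_refl)).
  assert (sumR f l <= sumR g l) by (apply IHl; auto). lra. Qed.

Lemma sumR_nonneg (f : T -> R) l : (forall x, 0 <= f x) -> 0 <= sumR f l.
Proof. induction l; simpl; intros. lra. pose proof (H a). pose proof (IHl H). lra. Qed.

Lemma sumR_perm (f : T -> R) l l' : Permutation l l' -> sumR f l = sumR f l'.
Proof. induction 1; simpl; try lra. Qed.

Lemma sumC_perm (f : T -> Cx) l l' : Permutation l l' -> sumC f l = sumC f l'.
Proof. induction 1; simpl; auto. rewrite IHPermutation; auto. Csolve. congruence. Qed.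

Lemma sumR_filter (f : T -> R) (p : T -> bool) l :
  sumR f l = sumR f (filter p l) + sumR f (filter (fun x => negb (p x)) l).
Proof. induction l; simpl. ring. destruct (p a); simpl; rewrite IHl; ring. Qed.

Lemma sumC_filter (f : T -> Cx) (p : T -> bool) l :
  sumC f l = Cadd (sumC f (filter p l)) (sumC f (filter (fun x => negb (p x)) l)).
Proof. induction l; simpl. Csolve. destruct (p a); simpl; rewrite IHl; Csolve. Qed.

Lemma sumC_add (f g : T -> Cx) l : sumC (fun x => Cadd (f x) (g x)) l = Cadd (sumC f l) (sumC g l).
Proof. induction l; simpl. Csolve. rewrite IHl. Csolve. Qed.

Lemma sumC_scal (z : Cx) (f : T -> Cx) l : sumC (fun x => Cmul z (f x)) l = Cmul z (sumC f l).
Proof. induction l; simpl. Csolve. rewrite IHl. Csolve. Qed.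

Lemma sumR_scal (c : R) (f : T -> R) l : sumR (fun x => c * f x) l = c * sumR f l.
Proof. induction l; simpl. ring. rewrite IHl. ring. Qed.

Lemma sumC_norm (f : T -> Cx) l : Cnorm (sumC f l) <= sumR (fun x => Cnorm (f x)) l.
Proof. induction l; simpl. rewrite Cnorm_C0; lra.
  eapply Rle_trans. apply Cnorm_triangle. lra. Qed.

Lemma sumC_zero (f : T -> Cx) l : (forall x, In x l -> f x = C0) -> sumC f l = C0.
Proof. induction l; simpl; intros; auto. rewrite H, IHl; auto. Csolve. Qed.

Lemma filter_memb_perm (F G : list T) : NoDup F -> NoDup G -> incl F G ->
  Permutation (filter (memb F) G) F.
Proof.
  intros. apply NoDup_Permutation; auto. apply NoDup_filter; auto.
  intros x. rewrite filter_In, memb_true. split; [tauto | intro; split; auto].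
Qed.

Lemma sumC_split (f : T -> Cx) F G : NoDup F -> NoDup G -> incl F G ->
  sumC f G = Cadd (sumC f F) (sumC f (filter (notin F) G)).
Proof.
  intros. rewrite (sumC_filter f (memb F) G). rewrite (sumC_perm _ _ _ (filter_memb_perm F G H H0 H1)).
  reflexivity.
Qed.

Lemma sumR_split (f : T -> R) F G : NoDup F -> NoDup G -> incl F G ->
  sumR f G = sumR f F + sumR f (filter (notin F) G).
Proof.
  intros. rewrite (sumR_filter f (memb F) G). rewrite (sumR_perm _ _ _ (filter_memb_perm F G H H0 H1)).
  reflexivity.
Qed.

Lemma sumR_nodup_le (f : T -> R) L : (forall x, 0 <= f x) -> sumR f (nodup deq L) <= sumR f L.
Proof. induction L; simpl; intros. lra. destruct (in_dec deq a L); simpl.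
  pose proof (H a). pose proof (IHL H). lra. pose proof (IHL H); lra. Qed.

Lemma sumR_incl_le (f : T -> R) Q L : (forall x, 0 <= f x) -> NoDup Q -> incl Q L ->
  sumR f Q <= sumR f L.
Proof.
  intros. eapply Rle_trans; [| apply sumR_nodup_le; auto].
  rewrite (sumR_split f Q (nodup deq L)); auto.
  pose proof (sumR_nonneg f (filter (notin Q) (nodup deq L)) H). lra.
  apply NoDup_nodup. intros x Hx. apply nodup_In. auto.
Qed.

Lemma sumR_supp_le (f : T -> R) L G : (forall x, 0 <= f x) -> (forall x, ~ In x L -> f x = 0) ->
  NoDup G -> sumR f G <= sumR f L.
Proof.
  intros. rewrite (sumR_filter f (memb L) G).
  assert (Hz : sumR f (filter (fun x : T => negb (memb L x)) G) = 0).
  { induction G as [|a G IH]; simpl; auto. inversion H1; subst.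
    destruct (memb L a) eqn:E; simpl; auto.
    rewrite H0. rewrite IH; auto; ring. intro Hin. apply memb_true in Hin. congruence. }
  rewrite Hz. rewrite Rplus_0_r. apply sumR_incl_le; auto. apply NoDup_filter; auto.
  intros x Hx. apply filter_In in Hx. apply memb_true. tauto.
Qed.
End Sums.

Lemma sumC_map {A B} (f : B -> Cx) (g : A -> B) l : sumC f (map g l) = sumC (fun x => f (g x)) l.
Proof. induction l; simpl; auto. rewrite IHl; auto. Qed.
Lemma sumR_map {A B} (f : B -> R) (g : A -> B) l : sumR f (map g l) = sumR (fun x => f (g x)) l.
Proof. induction l; simpl; auto. rewrite IHl; auto. Qed.
Lemma tail_lemma {T} (g : T -> R) M : (forall x, 0 <= g x) ->
  (forall G, NoDup G -> sumR g G <= M) -> forall eta, 0 < eta ->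
  exists F0, NoDup F0 /\ forall G, NoDup G -> (forall x, In x G -> ~ In x F0) -> sumR g G <= eta.
Proof.
  intros Hg HM eta Heta.
  set (E := fun r => exists F, NoDup F /\ r = sumR g F).
  assert (Hb : bound E). { exists M. intros r [F [HF ->]]. auto. }
  assert (He : exists x, E x). { exists 0. exists nil. split. constructor. reflexivity. }
  destruct (completeness E Hb He) as [m [Hub Hlub]].
  assert (exists F, NoDup F /\ sumR g F > m - eta).
  { apply NNPP. intro Hn. assert (m <= m - eta). apply Hlub. intros r [F [HF ->]].
    apply Rnot_lt_le. intro. apply Hn. exists F; split; auto. lra. }
  destruct H as [F [HF HFm]]. exists F. split; auto. intros G HG Hd.
  assert (E (sumR g (G ++ F))). { exists (G ++ F). split; auto. apply NoDup_app; auto. }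
  apply Hub in H. rewrite sumR_app in H. lra.
Qed.

Lemma incl_nodup_l {T} (F1 F2 : list T) : incl F1 (nodup deq (F1 ++ F2)).
Proof. intros x Hx. apply nodup_In. apply in_or_app. auto. Qed.
Lemma incl_nodup_r {T} (F1 F2 : list T) : incl F2 (nodup deq (F1 ++ F2)).
Proof. intros x Hx. apply nodup_In. apply in_or_app. auto. Qed.

Lemma Cnorm_eq0 z w : Cnorm (Csub z w) = 0 -> z = w.
Proof.
  unfold Cnorm. intro H. destruct z as [a b], w as [c d]; unfold Csub in H; simpl in *.
  pose proof (Rle_0_sqr (a-c)); pose proof (Rle_0_sqr (b-d)); unfold Rsqr in *.
  apply sqrt_eq_0 in H; [| lra].
  assert (E1 : (a - c) * (a - c) = 0) by lra. assert (E2 : (b - d) * (b - d) = 0) by lra.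
  apply Rmult_integral in E1. apply Rmult_integral in E2.
  apply Cext; simpl; lra.
Qed.

Lemma small_zero x : 0 <= x -> (forall eps, 0 < eps -> x < eps) -> x = 0.
Proof. intros. destruct (Rle_lt_or_eq_dec 0 x H); auto. specialize (H0 x r). lra. Qed.

Lemma Chas_unique {T} (f : T -> Cx) l1 l2 : Chas_sum f l1 -> Chas_sum f l2 -> l1 = l2.
Proof.
  intros H1 H2. apply Cnorm_eq0. apply small_zero. apply Cnorm_nonneg. intros eps He.
  destruct (H1 (eps/2)) as [F1 HF1]. lra. destruct (H2 (eps/2)) as [F2 HF2]. lra.
  set (F := nodup deq (F1 ++ F2)).
  assert (A1 := HF1 F (NoDup_nodup _ _) (incl_nodup_l _ _)).
  assert (A2 := HF2 F (NoDup_nodup _ _) (incl_nodup_r _ _)).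
  pose proof (Cnorm_sub_tri l1 (sumC f F) l2). rewrite Cnorm_sub_sym in A1. lra.
Qed.

Lemma Chas_add {T} (f g : T -> Cx) l m : Chas_sum f l -> Chas_sum g m ->
  Chas_sum (fun x => Cadd (f x) (g x)) (Cadd l m).
Proof.
  intros H1 H2 eps He.
  destruct (H1 (eps/2)) as [F1 HF1]. lra. destruct (H2 (eps/2)) as [F2 HF2]. lra.
  exists (F1 ++ F2). intros F HF Hi.
  assert (A1 := HF1 F HF (fun x h => Hi x (in_or_app _ _ _ (or_introl h)))).
  assert (A2 := HF2 F HF (fun x h => Hi x (in_or_app _ _ _ (or_intror h)))).
  rewrite sumC_add.
  replace (Csub (Cadd (sumC f F) (sumC g F)) (Cadd l m)) with
    (Cadd (Csub (sumC f F) l) (Csub (sumC g F) m)) by Csolve.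
  pose proof (Cnorm_triangle (Csub (sumC f F) l) (Csub (sumC g F) m)). lra.
Qed.

Lemma Chas_scal {T} (z : Cx) (f : T -> Cx) l : Chas_sum f l ->
  Chas_sum (fun x => Cmul z (f x)) (Cmul z l).
Proof.
  intros H eps He. pose proof (Cnorm_nonneg z).
  destruct (H (eps / (Cnorm z + 1))) as [F0 HF0]. apply Rdiv_lt_0_compat; lra.
  exists F0. intros F HF Hi. specialize (HF0 F HF Hi). rewrite sumC_scal.
  replace (Csub (Cmul z (sumC f F)) (Cmul z l)) with (Cmul z (Csub (sumC f F) l)) by Csolve.
  rewrite Cnorm_mul. pose proof (Cnorm_nonneg (Csub (sumC f F) l)).
  apply Rle_lt_trans with ((Cnorm z + 1) * Cnorm (Csub (sumC f F) l)). nra.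
  apply Rmult_lt_reg_l with (/ (Cnorm z + 1)). apply Rinv_0_lt_compat; lra.
  rewrite <- Rmult_assoc, Rinv_l by lra. unfold Rdiv in HF0. lra.
Qed.

Lemma Chas_ext {T} (f g : T -> Cx) l : (forall x, f x = g x) -> Chas_sum f l -> Chas_sum g l.
Proof. intros. replace g with f; auto. apply functional_extensionality; auto. Qed.

Lemma Chas_bound {T} (f : T -> Cx) l M : Chas_sum f l ->
  (forall G, NoDup G -> sumR (fun x => Cnorm (f x)) G <= M) -> Cnorm l <= M.
Proof.
  intros H HM. apply Rnot_lt_le. intro Hlt.
  destruct (H (Cnorm l - M)) as [F0 HF0]. lra.
  specialize (HF0 (nodup deq F0) (NoDup_nodup _ _) (fun x h => proj2 (nodup_In _ _ _) h)).
  pose proof (HM _ (NoDup_nodup deq F0)). pose proof (sumC_norm f (nodup deq F0)).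
  pose proof (Cnorm_sub_tri l (sumC f (nodup deq F0)) C0).
  replace (Csub l C0) with l in H2 by Csolve. replace (Csub (sumC f (nodup deq F0)) C0) with (sumC f (nodup deq F0)) in H2 by Csolve.
  rewrite Cnorm_sub_sym in HF0. lra.
Qed.

Lemma Chas_finite {T} (f : T -> Cx) L : NoDup L -> (forall x, ~ In x L -> f x = C0) ->
  Chas_sum f (sumC f L).
Proof.
  intros HL Hz eps He. exists L. intros F HF Hi. rewrite (sumC_split f L F HL HF Hi).
  rewrite (sumC_zero f (filter (notin L) F)). replace (Csub (Cadd (sumC f L) C0) (sumC f L)) with C0 by Csolve.
  rewrite Cnorm_C0; lra.
  intros x Hx. apply filter_In in Hx. apply Hz. apply notin_true. tauto.
Qed.
Lemma inv_small n N : (0 < N)%nat -> (n >= N)%nat -> / (INR n + 1) < / INR N.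
Proof.
  intros. apply Rinv_lt_contravar. apply Rmult_lt_0_compat. apply lt_0_INR; lia.
  pose proof (pos_INR n); lra. apply le_INR in H0. lra.
Qed.

Lemma Chas_exists {T} (f : T -> Cx) M :
  (forall G, NoDup G -> sumR (fun x => Cnorm (f x)) G <= M) -> exists l, Chas_sum f l.
Proof.
  intros HM.
  assert (Ht : forall n : nat, exists F, NoDup F /\ forall G, NoDup G -> (forall x, In x G -> ~ In x F) ->
     sumR (fun x => Cnorm (f x)) G <= / (INR n + 1)).
  { intro n. apply (tail_lemma _ M); auto. intros; apply Cnorm_nonneg.
    apply Rinv_0_lt_compat. pose proof (pos_INR n); lra. }
  set (Fn := fun n => proj1_sig (constructive_indefinite_description _ (Ht n))).
  assert (HF : forall n, NoDup (Fn n) /\ forall G, NoDup G -> (forall x, In x G -> ~ In x (Fn n)) ->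
     sumR (fun x => Cnorm (f x)) G <= / (INR n + 1)).
  { intro n. exact (proj2_sig (constructive_indefinite_description _ (Ht n))). }
  set (s := fun n => sumC f (Fn n)).
  assert (Key : forall n G, NoDup G -> incl (Fn n) G -> Cnorm (Csub (sumC f G) (s n)) <= / (INR n + 1)).
  { intros n G HG Hi. destruct (HF n) as [HN Htl]. unfold s.
    rewrite (sumC_split f (Fn n) G HN HG Hi).
    replace (Csub (Cadd (sumC f (Fn n)) (sumC f (filter (notin (Fn n)) G))) (sumC f (Fn n)))
      with (sumC f (filter (notin (Fn n)) G)) by Csolve.
    eapply Rle_trans. apply sumC_norm. apply Htl. apply NoDup_filter; auto.
    intros x Hx. apply filter_In in Hx. apply notin_true. tauto. }
  assert (Cau : forall n m, Cnorm (Csub (s n) (s m)) <= / (INR n + 1) + / (INR m + 1)).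
  { intros n m. set (H := nodup deq (Fn n ++ Fn m)).
    pose proof (Key n H (NoDup_nodup _ _) (incl_nodup_l _ _)).
    pose proof (Key m H (NoDup_nodup _ _) (incl_nodup_r _ _)).
    pose proof (Cnorm_sub_tri (s n) (sumC f H) (s m)). rewrite Cnorm_sub_sym in H0. lra. }
  assert (Cc : forall (p : Cx -> R), (forall z, Rabs (p z) <= Cnorm z) -> (forall z w, p (Csub z w) = p z - p w) ->
    Cauchy_crit (fun n => p (s n))).
  { intros p Hp Hpl eps He. destruct (archimed_cor1 (eps/2)) as [N [HN1 HN2]]. lra.
    exists N. intros n m Hn Hm. unfold Rdist. rewrite <- Hpl.
    eapply Rle_lt_trans. apply Hp. eapply Rle_lt_trans. apply Cau.
    pose proof (inv_small n N HN2 Hn). pose proof (inv_small m N HN2 Hm). lra. }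
  destruct (R_complete _ (Cc Re Re_le (fun z w => eq_refl))) as [lr Hlr].
  destruct (R_complete _ (Cc Im Im_le (fun z w => eq_refl))) as [li Hli].
  exists (mkC lr li). intros eps He.
  destruct (Hlr (eps/4)) as [N1 HN1]. lra. destruct (Hli (eps/4)) as [N2 HN2]. lra.
  destruct (archimed_cor1 (eps/4)) as [N3 [HN3 HN3']]. lra.
  set (n := (N1 + N2 + N3)%nat).
  exists (Fn n). intros G HG Hi.
  pose proof (Key n G HG Hi).
  pose proof (inv_small n N3 HN3' ltac:(unfold n; lia)).
  specialize (HN1 n ltac:(unfold n; lia)). specialize (HN2 n ltac:(unfold n; lia)).
  unfold Rdist in HN1, HN2.
  pose proof (Cnorm_le_ReIm (Csub (s n) (mkC lr li))) as HH.
  change (Re (Csub (s n) (mkC lr li))) with (Re (s n) - lr) in HH.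
  change (Im (Csub (s n) (mkC lr li))) with (Im (s n) - li) in HH.
  pose proof (Cnorm_sub_tri (sumC f G) (s n) (mkC lr li)). lra.
Qed.
Section Fiber.
Context {P T : Type} (pi : P -> T).

Fixpoint lift (s : T) (L : list P) : list {p | pi p = s} :=
  match L with
  | nil => nil
  | p :: L' => match deq (pi p) s with
               | left e => exist _ p e :: lift s L'
               | right _ => lift s L'
               end
  end.

Lemma lift_in s L p (e : pi p = s) : In p L -> In (exist _ p e) (lift s L).
Proof.
  induction L; simpl; auto. intros [-> | H].
  - destruct (deq (pi p) s). left. f_equal. apply proof_irrelevance. contradiction.
  - destruct (deq (pi a) s); auto. right; auto.
Qed.

Lemma proj1_inj s : FinFun.Injective (fun q : {p | pi p = s} => proj1_sig q).
Proof. intros [x ex] [y ey]; simpl; intros ->. f_equal. apply proof_irrelevance. Qed.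

Lemma Chas_fiber (h : P -> Cx) L (d : T -> Cx) : Chas_sum h L ->
  (forall s, Chas_sum (fun q : {p | pi p = s} => h (proj1_sig q)) (d s)) -> Chas_sum d L.
Proof.
  intros Hh Hd eps He. destruct (Hh (eps/2)) as [P0 HP0]. lra.
  exists (map pi P0). intros Ls HLs Hi.
  set (eta := eps / (2 * (INR (length Ls) + 1))).
  assert (Heta : 0 < eta). { unfold eta. apply Rdiv_lt_0_compat. lra. pose proof (pos_INR (length Ls)); lra. }
  assert (Claim : forall Ls', NoDup Ls' -> exists Q, NoDup Q /\ (forall p, In p Q -> In (pi p) Ls') /\
    (forall p, In p P0 -> In (pi p) Ls' -> In p Q) /\
    Cnorm (Csub (sumC d Ls') (sumC h Q)) <= eta * INR (length Ls')).
  { induction Ls' as [|s Ls' IH]; intros HN.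
    - exists nil. simpl. split; [constructor | split; [tauto | split; [tauto |]]].
      replace (Csub C0 C0) with C0 by Csolve. rewrite Cnorm_C0. lra.
    - inversion HN; subst. destruct (IH H2) as [Q [HQ1 [HQ2 [HQ3 HQ4]]]].
      destruct (Hd s eta Heta) as [F0s HF0s].
      set (Fs := nodup deq (F0s ++ lift s P0)).
      exists (map (@proj1_sig _ _) Fs ++ Q).
      assert (Hmap : forall p, In p (map (@proj1_sig _ _) Fs) -> pi p = s).
      { intros p Hp. apply in_map_iff in Hp. destruct Hp as [[q e] [<- _]]. exact e. }
      split; [| split; [| split]].
      + apply NoDup_app. apply FinFun.Injective_map_NoDup. apply proj1_inj. apply NoDup_nodup. auto.
        intros p Hp1 Hp2. apply Hmap in Hp1. apply HQ2 in Hp2. congruence.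
      + intros p Hp. apply in_app_or in Hp. destruct Hp as [Hp|Hp]. left. symmetry; auto. right; auto.
      + intros p Hp Hps. destruct (deq (pi p) s) as [e|ne].
        * apply in_or_app. left. apply in_map_iff. exists (exist _ p e). split; auto.
          apply incl_nodup_r. apply lift_in; auto.
        * apply in_or_app. right. apply HQ3; auto. destruct Hps; [congruence | auto].
      + specialize (HF0s Fs (NoDup_nodup _ _) (incl_nodup_l _ _)).
        simpl sumC. rewrite sumC_app, sumC_map.
        replace (Csub (Cadd (d s) (sumC d Ls')) (Cadd (sumC (fun x => h (proj1_sig x)) Fs) (sumC h Q)))
          with (Cadd (Csub (d s) (sumC (fun x => h (proj1_sig x)) Fs)) (Csub (sumC d Ls') (sumC h Q))) by Csolve.
        eapply Rle_trans. apply Cnorm_triangle. rewrite Cnorm_sub_sym.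
        simpl length. rewrite S_INR. lra. }
  destruct (Claim Ls HLs) as [Q [HQ1 [HQ2 [HQ3 HQ4]]]].
  assert (Hin : incl P0 Q). { intros p Hp. apply HQ3; auto. apply Hi. apply in_map; auto. }
  specialize (HP0 Q HQ1 Hin).
  pose proof (Cnorm_sub_tri (sumC d Ls) (sumC h Q) L).
  assert (eta * INR (length Ls) <= eps / 2).
  { assert (eta * (INR (length Ls) + 1) = eps / 2). unfold eta. field. pose proof (pos_INR (length Ls)); lra.
    pose proof (pos_INR (length Ls)). nra. }
  lra.
Qed.
End Fiber.

Lemma Chas_transfer {Y Z} (tau : Z -> Y) (sigma : Y -> Z) (k : Y -> Cx) l :
  FinFun.Injective tau -> (forall y, tau (sigma y) = y) ->
  Chas_sum k l -> Chas_sum (fun z => k (tau z)) l.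
Proof.
  intros Hinj Hs Hk eps He. destruct (Hk eps He) as [F0 HF0].
  exists (map sigma F0). intros G HG Hi.
  rewrite <- sumC_map. apply HF0. apply FinFun.Injective_map_NoDup; auto.
  intros y Hy. rewrite <- (Hs y). apply in_map. apply Hi. apply in_map; auto.
Qed.

Lemma sumR_prod {X Y} (f : X -> R) (g : Y -> R) A B :
  sumR (fun p => f (fst p) * g (snd p)) (list_prod A B) = sumR f A * sumR g B.
Proof.
  induction A; simpl. ring. rewrite sumR_app, IHA, sumR_map. simpl.
  rewrite sumR_scal. ring.
Qed.

Lemma Chas_prod {X Y} (f : X -> Cx) (g : Y -> Cx) a b Mf Mg :
  Chas_sum f a -> Chas_sum g b ->
  (forall G, NoDup G -> sumR (fun x => Cnorm (f x)) G <= Mf) ->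
  (forall G, NoDup G -> sumR (fun x => Cnorm (g x)) G <= Mg) ->
  Chas_sum (fun p : X * Y => Cmul (f (fst p)) (g (snd p))) (Cmul a b).
Proof.
  intros Hf Hg HMf HMg.
  assert (HM : forall Q, NoDup Q -> sumR (fun p : X * Y => Cnorm (Cmul (f (fst p)) (g (snd p)))) Q <= Mf * Mg).
  { intros Q HQ. set (A := nodup deq (map fst Q)). set (B := nodup deq (map snd Q)).
    eapply Rle_trans. apply (sumR_incl_le _ Q (list_prod A B)). intros; apply Cnorm_nonneg. auto.
    intros [x y] Hxy. apply in_prod; apply nodup_In. change x with (fst (x,y)); apply in_map; auto.
    change y with (snd (x,y)); apply in_map; auto.
    rewrite (sumR_ext _ (fun p => Cnorm (f (fst p)) * Cnorm (g (snd p)))) by (intros; apply Cnorm_mul).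
    rewrite (sumR_prod (fun x => Cnorm (f x)) (fun y => Cnorm (g y))). pose proof (HMf A (NoDup_nodup _ _)). pose proof (HMg B (NoDup_nodup _ _)).
    pose proof (sumR_nonneg (fun x => Cnorm (f x)) A (fun x => Cnorm_nonneg _)).
    pose proof (sumR_nonneg (fun x => Cnorm (g x)) B (fun x => Cnorm_nonneg _)).
    apply Rmult_le_compat; auto. }
  destruct (Chas_exists _ _ HM) as [c Hc].
  assert (Hfib : forall x : X, Chas_sum (fun q : {p : X * Y | fst p = x} =>
      Cmul (f (fst (proj1_sig q))) (g (snd (proj1_sig q)))) (Cmul (f x) b)).
  { intro x. eapply Chas_ext.
    2:{ apply (Chas_transfer (fun q : {p : X * Y | fst p = x} => snd (proj1_sig q))
             (fun y => exist (fun p : X * Y => fst p = x) (x, y) eq_refl)).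
        - intros [[x1 y1] e1] [[x2 y2] e2]; simpl in *. intros ->. subst. try (f_equal; apply proof_irrelevance).
        - reflexivity.
        - apply Chas_scal. exact Hg. }
    intros [[x1 y1] e1]. simpl in *. subst. reflexivity. }
  pose proof (Chas_fiber fst _ _ _ Hc Hfib).
  assert (Chas_sum (fun x => Cmul (f x) b) (Cmul a b)).
  { replace (Cmul a b) with (Cmul b a) by Csolve. eapply Chas_ext. 2: apply (Chas_scal b f a Hf). intro; Csolve. }
  rewrite <- (Chas_unique _ _ _ H H0). exact Hc.
Qed.
Lemma memb_false {T} (F : list T) x : memb F x = false <-> ~ In x F.
Proof. unfold memb. destruct (in_dec deq x F); split; intros; auto; try discriminate; contradiction. Qed.

Section L1.
Context {S : Type} (w : S -> R) (Hw : is_weight w).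

Lemma l1_r_nonneg a r : l1_norm_le w a r -> 0 <= r.
Proof. intro H. apply (H nil). constructor. Qed.

Lemma l1_dom (a b : S -> Cx) r : (forall s, Cnorm (b s) <= Cnorm (a s)) -> l1_norm_le w a r -> l1_norm_le w b r.
Proof.
  intros Hd Ha G HG. eapply Rle_trans. 2: apply (Ha G HG). apply sumR_le. intros x _.
  apply Rmult_le_compat_r. left; apply Hw. auto.
Qed.

Lemma in_l1_dom (a b : S -> Cx) : (forall s, Cnorm (b s) <= Cnorm (a s)) -> in_l1 w a -> in_l1 w b.
Proof. intros Hd [r Hr]. exists r. eapply l1_dom; eauto. Qed.

Lemma l1_scal (a : S -> Cx) lam r : l1_norm_le w a r -> l1_norm_le w (fun s => Cmul lam (a s)) (Cnorm lam * r).
Proof.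
  intros Ha G HG. rewrite (sumR_ext _ (fun s => Cnorm lam * (Cnorm (a s) * w s))).
  rewrite sumR_scal. apply Rmult_le_compat_l. apply Cnorm_nonneg. auto.
  intros; rewrite Cnorm_mul; ring.
Qed.

Definition delta (x : S) : S -> Cx := fun s => if deq s x then C1 else C0.

Lemma delta_l1 x : l1_norm_le w (delta x) (w x).
Proof.
  intros G HG. eapply Rle_trans. apply (sumR_supp_le _ [x]).
  - intros; apply Rmult_le_pos. apply Cnorm_nonneg. left; apply Hw.
  - intros s Hs. unfold delta. destruct (deq s x). subst; simpl in Hs; tauto. rewrite Cnorm_C0; ring.
  - auto.
  - simpl. unfold delta. destruct (deq x x); [| congruence]. rewrite Cnorm_C1. lra.
Qed.

Definition dl (x : S) : l1 w := exist _ (delta x) (ex_intro _ (w x) (delta_l1 x)).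

Lemma w_ge1 (op : S -> S -> S) : is_semilattice S op -> submultiplicative op w -> forall x, 1 <= w x.
Proof.
  intros [_ [_ Hid]] Hs x. pose proof (Hs x x). rewrite Hid in H. pose proof (Hw x).
  apply Rmult_le_reg_l with (w x); auto. lra.
Qed.

Section Psi.
Context (psi : l1 w -> Cx) (Hpsi : bounded_linear w psi).

Lemma psi_scal lam (a c : l1 w) : (forall s, proj1_sig c s = Cmul lam (proj1_sig a s)) -> psi c = Cmul lam (psi a).
Proof. destruct Hpsi as [_ [H _]]. apply H. Qed.

Lemma psi_add (a b c : l1 w) : (forall s, proj1_sig c s = Cadd (proj1_sig a s) (proj1_sig b s)) -> psi c = Cadd (psi a) (psi b).
Proof. destruct Hpsi as [H _]. apply H. Qed.

Lemma psi_zero (c : l1 w) : (forall s, proj1_sig c s = C0) -> psi c = C0.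
Proof.
  intros H. rewrite (psi_scal C0 c c). Csolve. intros s. rewrite H. Csolve.
Qed.

Lemma psi_bound : exists M, 0 <= M /\ forall (a : l1 w) r, l1_norm_le w (proj1_sig a) r -> Cnorm (psi a) <= M * r.
Proof.
  destruct Hpsi as [_ [_ [M HM]]]. exists (Rmax M 0). split. apply Rmax_r.
  intros a r Hr. eapply Rle_trans. apply (HM a r Hr). apply Rmult_le_compat_r.
  eapply l1_r_nonneg; eauto. apply Rmax_l.
Qed.

Definition u (s : S) : Cx := psi (dl s).

Lemma psi_finite (a : S -> Cx) (Ha : in_l1 w a) : forall G, NoDup G -> forall c : l1 w,
  (forall s, proj1_sig c s = if memb G s then a s else C0) ->
  psi c = sumC (fun s => Cmul (a s) (u s)) G.
Proof.
  induction G as [|x G IH]; intros HG c Hc.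
  - apply psi_zero. intros s. rewrite Hc. reflexivity.
  - inversion HG as [|? ? Hx HG']; subst.
    assert (D1 : in_l1 w (fun s => Cmul (a x) (delta x s))).
    { apply (in_l1_dom a); auto. intros s. unfold delta. destruct (deq s x).
      subst. rewrite Cnorm_mul, Cnorm_C1. lra. rewrite Cnorm_mul, Cnorm_C0, Rmult_0_r. apply Cnorm_nonneg. }
    assert (D2 : in_l1 w (fun s => if memb G s then a s else C0)).
    { apply (in_l1_dom a); auto. intros s. destruct (memb G s). lra. rewrite Cnorm_C0. apply Cnorm_nonneg. }
    set (c1 := exist (in_l1 w) _ D1). set (c2 := exist (in_l1 w) _ D2).
    rewrite (psi_add c1 c2 c).
    + rewrite (IH HG' c2) by reflexivity. rewrite (psi_scal (a x) (dl x) c1) by reflexivity.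
      simpl. reflexivity.
    + intros s. rewrite Hc. simpl. unfold delta.
      destruct (deq s x) as [->|ne].
      * assert (memb (x :: G) x = true) by (apply memb_true; left; auto). rewrite H.
        assert (memb G x = false) by (apply memb_false; auto). rewrite H0. Csolve.
      * destruct (memb G s) eqn:E.
        -- assert (memb (x :: G) s = true). apply memb_true. right. apply memb_true; auto. rewrite H. Csolve.
        -- assert (memb (x :: G) s = false). apply memb_false. intros [h|h]. congruence. apply memb_false in E. auto.
           rewrite H. Csolve.
Qed.

Lemma psi_expand (a : l1 w) : Chas_sum (fun s => Cmul (proj1_sig a s) (u s)) (psi a).
Proof.
  destruct psi_bound as [M [HM0 HM]].
  destruct a as [a Ha0]. simpl. pose proof Ha0 as [r Hr]. intros eps He.
  destruct (tail_lemma (fun s => Cnorm (a s) * w s) r) with (eta := eps / (2 * (M + 1))) as [F0 [HF0 HT]].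
  - intros; apply Rmult_le_pos. apply Cnorm_nonneg. left; apply Hw.
  - auto.
  - apply Rdiv_lt_0_compat; lra.
  - exists F0. intros G HG Hi.
    assert (Ha : in_l1 w a) by (exists r; auto).
    assert (H1 : in_l1 w (fun s => if memb G s then a s else C0)).
    { apply (in_l1_dom a); auto. intros s. destruct (memb G s). lra. rewrite Cnorm_C0. apply Cnorm_nonneg. }
    assert (H2 : in_l1 w (fun s => if memb G s then C0 else a s)).
    { apply (in_l1_dom a); auto. intros s. destruct (memb G s). rewrite Cnorm_C0. apply Cnorm_nonneg. lra. }
    set (c1 := exist (in_l1 w) _ H1). set (c2 := exist (in_l1 w) _ H2).
    rewrite (psi_add c1 c2 (exist (fun a0 : S -> Cx => in_l1 w a0) a Ha0)).
    2:{ intros s. simpl. destruct (memb G s); Csolve. }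
    rewrite <- (psi_finite a Ha G HG c1) by reflexivity.
    replace (Csub (psi c1) (Cadd (psi c1) (psi c2))) with (Cmul (Cr (-1)) (psi c2)) by Csolve.
    rewrite Cnorm_mul, Cnorm_Cr, Rabs_m1, Rmult_1_l.
    assert (Hn : l1_norm_le w (proj1_sig c2) (eps / (2 * (M + 1)))).
    { intros H HH. simpl. rewrite (sumR_filter _ (memb G) H).
      rewrite (sumR_ext _ (fun _ => 0) (filter (memb G) H)).
      2:{ intros s Hs. apply filter_In in Hs. destruct Hs as [_ Hs]. rewrite Hs, Cnorm_C0. ring. }
      assert (Z : forall l : list S, sumR (fun _ => 0) l = 0) by (induction l; simpl; auto; rewrite IHl; ring).
      rewrite Z, Rplus_0_l.
      rewrite (sumR_ext _ (fun s => Cnorm (a s) * w s)).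
      2:{ intros s Hs. apply filter_In in Hs. destruct Hs as [_ Hs]. destruct (memb G s); simpl in Hs; [discriminate | auto]. }
      apply HT. apply NoDup_filter; auto. intros s Hs Hs2. apply filter_In in Hs. destruct Hs as [_ Hs].
      assert (memb G s = true) by (apply memb_true; auto). rewrite H0 in Hs. discriminate. }
    pose proof (HM c2 _ Hn).
    assert (M * (eps / (2 * (M + 1))) < eps).
    { assert (M * (eps / (2 * (M + 1))) = eps * (M / (2 * (M+1)))) by (field; lra). rewrite H0.
      assert (M / (2 * (M + 1)) < 1). { apply Rmult_lt_reg_r with (2 * (M+1)). lra.
        unfold Rdiv. rewrite Rmult_assoc, Rinv_l by lra. lra. }
      nra. }
    lra.
Qed.
End Psi.
End L1.
Section Phi.
Context {S : Type} (op : S -> S -> S) (w : S -> R) (Hw : is_weight w)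
  (HS : is_semilattice S op) (Hsub : submultiplicative op w)
  (chi : S -> Cx) (Hchi1 : forall s, Cnorm (chi s) <= 1)
  (Hchim : forall x y, chi (op x y) = Cmul (chi x) (chi y)).

Lemma chi_abs a r : l1_norm_le w a r -> forall G, NoDup G ->
  sumR (fun s => Cnorm (Cmul (chi s) (a s))) G <= r.
Proof.
  intros Ha G HG. eapply Rle_trans. 2: apply (Ha G HG). apply sumR_le. intros s _.
  rewrite Cnorm_mul. pose proof (Hchi1 s). pose proof (Cnorm_nonneg (chi s)).
  pose proof (Cnorm_nonneg (a s)). pose proof (w_ge1 w Hw op HS Hsub s). nra.
Qed.

Lemma phi_ex (a : l1 w) : exists l, Chas_sum (fun s => Cmul (chi s) (proj1_sig a s)) l.
Proof. destruct a as [a [r Hr]]. simpl. eapply Chas_exists. apply (chi_abs a r Hr). Qed.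

Definition phi (a : l1 w) : Cx := proj1_sig (constructive_indefinite_description _ (phi_ex a)).
Lemma phi_spec a : Chas_sum (fun s => Cmul (chi s) (proj1_sig a s)) (phi a).
Proof. exact (proj2_sig (constructive_indefinite_description _ (phi_ex a))). Qed.

Lemma phi_mf : multiplicative_functional op w phi.
Proof.
  split; [split; [| split] |].
  - intros a b c Hc. apply (Chas_unique _ _ _ (phi_spec c)).
    eapply Chas_ext. 2: apply (Chas_add _ _ _ _ (phi_spec a) (phi_spec b)).
    intros s. simpl. rewrite Hc. Csolve.
  - intros lam a c Hc. apply (Chas_unique _ _ _ (phi_spec c)).
    eapply Chas_ext. 2: apply (Chas_scal lam _ _ (phi_spec a)).
    intros s. simpl. rewrite Hc. Csolve.
  - exists 1. intros a r Hr. rewrite Rmult_1_l. eapply Chas_bound. apply phi_spec. apply chi_abs; auto.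
  - intros [a [ra Ha]] [b [rb Hb]] [c Hc'] Hc. simpl in Hc.
    pose proof (Chas_prod _ _ _ _ _ _ (phi_spec (exist _ a (ex_intro _ ra Ha))) (phi_spec (exist _ b (ex_intro _ rb Hb)))
       (chi_abs a ra Ha) (chi_abs b rb Hb)) as Hp. simpl in Hp.
    apply (Chas_unique _ _ _ (phi_spec _)). simpl.
    apply (Chas_fiber (fun p : S * S => op (fst p) (snd p)) _ _ _ Hp).
    intros s. eapply Chas_ext. 2: apply (Chas_scal (chi s) _ _ (Hc s)).
    intros [[x y] e]. simpl in *. subst s. rewrite Hchim. Csolve.
Qed.

Lemma phi_dist (psi : l1 w -> Cx) (Hpsi : bounded_linear w psi) eps : 0 <= eps ->
  (forall s, Cnorm (Csub (u w Hw psi s) (chi s)) <= eps * w s) -> dual_dist_le w psi phi eps.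
Proof.
  intros He Hd a Ha.
  pose proof (Chas_add _ _ _ _ (psi_expand w Hw psi Hpsi a) (Chas_scal (Cr (-1)) _ _ (phi_spec a))) as H.
  replace (Csub (psi a) (phi a)) with (Cadd (psi a) (Cmul (Cr (-1)) (phi a))) by Csolve.
  replace eps with (eps * 1) by ring.
  eapply Chas_bound. apply H. intros G HG. eapply Rle_trans.
  2:{ apply Rmult_le_compat_l. auto. apply (Ha G HG). }
  rewrite <- sumR_scal. apply sumR_le. intros s _.
  replace (Cadd (Cmul (proj1_sig a s) (u w Hw psi s)) (Cmul (Cr (-1)) (Cmul (chi s) (proj1_sig a s))))
    with (Cmul (proj1_sig a s) (Csub (u w Hw psi s) (chi s))) by Csolve.
  rewrite Cnorm_mul. pose proof (Hd s). pose proof (Cnorm_nonneg (proj1_sig a s)). nra.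
Qed.
End Phi.
Section Defect.
Context {S : Type} (op : S -> S -> S) (w : S -> R) (Hw : is_weight w)
  (psi : l1 w -> Cx) (Hpsi : bounded_linear w psi) (dl0 : R) (Hdef : defect_le op w psi dl0).

Lemma defect_pt x y : Cnorm (Csub (u w Hw psi (op x y)) (Cmul (u w Hw psi x) (u w Hw psi y))) <= dl0 * w x * w y.
Proof.
  pose proof (Hw x) as wx. pose proof (Hw y) as wy.
  assert (Ex : l1_norm_le w (fun s => Cmul (Cr (/ w x)) (delta x s)) 1).
  { replace 1 with (Cnorm (Cr (/ w x)) * w x). apply l1_scal; auto. apply delta_l1; auto.
    rewrite Cnorm_Cr, Rabs_right. field; lra. left; apply Rinv_0_lt_compat; lra. }
  assert (Ey : l1_norm_le w (fun s => Cmul (Cr (/ w y)) (delta y s)) 1).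
  { replace 1 with (Cnorm (Cr (/ w y)) * w y). apply l1_scal; auto. apply delta_l1; auto.
    rewrite Cnorm_Cr, Rabs_right. field; lra. left; apply Rinv_0_lt_compat; lra. }
  assert (Ec : in_l1 w (fun s => Cmul (Cr (/ (w x * w y))) (delta (op x y) s))).
  { eexists. apply l1_scal; auto. apply delta_l1; auto. }
  set (ex := exist (in_l1 w) _ (ex_intro _ 1 Ex)).
  set (ey := exist (in_l1 w) _ (ex_intro _ 1 Ey)).
  set (ec := exist (in_l1 w) _ Ec).
  assert (Hconv : is_conv op (proj1_sig ex) (proj1_sig ey) (proj1_sig ec)).
  { intros s. simpl. destruct (deq (op x y) s) as [e|ne].
    - set (q0 := exist (fun p : S * S => op (fst p) (snd p) = s) (x, y) e).
      match goal with |- Chas_sum ?f ?v => replace v with (sumC f [q0]) end.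
      + apply (Chas_finite _ [q0]). repeat constructor. simpl; auto.
        intros [[x1 y1] e1] Hq. simpl. unfold delta.
        destruct (deq x1 x); destruct (deq y1 y); try (Csolve).
        subst. exfalso. apply Hq. left. unfold q0. f_equal. apply proof_irrelevance.
      + simpl. unfold delta. subst s. destruct (deq x x); [|congruence]. destruct (deq y y); [|congruence].
        destruct (deq (op x y) (op x y)); [|congruence]. apply Cext; unfold Cmul, Cadd, C1, C0, Cr; simpl; field; lra.
    - match goal with |- Chas_sum ?f ?v => replace v with (sumC f []) end.
      + apply (Chas_finite _ []). constructor.
        intros [[x1 y1] e1] _. simpl. unfold delta.
        destruct (deq x1 x); destruct (deq y1 y); try (Csolve). subst; simpl in *; congruence.
      + simpl. unfold delta. destruct (deq s (op x y)). congruence. Csolve. }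
  pose proof (Hdef ex ey ec Ex Ey Hconv) as D.
  rewrite (psi_scal w psi Hpsi (Cr (/ w x)) (dl w Hw x) ex) in D by reflexivity.
  rewrite (psi_scal w psi Hpsi (Cr (/ w y)) (dl w Hw y) ey) in D by reflexivity.
  rewrite (psi_scal w psi Hpsi (Cr (/ (w x * w y))) (dl w Hw (op x y)) ec) in D by reflexivity.
  unfold u.
  replace (Csub (Cmul (Cr (/ (w x * w y))) (psi (dl w Hw (op x y))))
             (Cmul (Cmul (Cr (/ w x)) (psi (dl w Hw x))) (Cmul (Cr (/ w y)) (psi (dl w Hw y)))))
    with (Cmul (Cr (/ (w x * w y))) (Csub (psi (dl w Hw (op x y))) (Cmul (psi (dl w Hw x)) (psi (dl w Hw y))))) in D
    by (apply Cext; unfold Cmul, Csub, Cr; simpl; field; lra).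
  rewrite Cnorm_mul, Cnorm_Cr, Rabs_right in D.
  2:{ left. apply Rinv_0_lt_compat. nra. }
  set (N := Cnorm _) in *.
  assert (N = (/ (w x * w y) * N) * (w x * w y)) by (field; lra).
  rewrite H. replace (dl0 * w x * w y) with (dl0 * (w x * w y)) by ring. apply Rmult_le_compat_r. nra. auto.
Qed.
End Defect.
Lemma Rabs_le_inv x y : Rabs x <= y -> -y <= x <= y.
Proof. unfold Rabs; destruct (Rcase_abs x); intros; lra. Qed.

Lemma near1 z : Rabs (Cnorm z - 1) <= Cnorm (Csub C1 z).
Proof.
  pose proof (Cnorm_ge_sub C1 z). pose proof (Cnorm_ge_sub z C1). rewrite Cnorm_C1 in *.
  rewrite (Cnorm_sub_sym z C1) in H0. unfold Rabs. destruct (Rcase_abs _); lra.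
Qed.

Definition dich (mu : R) (z : Cx) := Cnorm z <= mu \/ Cnorm (Csub C1 z) <= mu.

Lemma dich_bound mu z : 0 <= mu -> dich mu z -> Cnorm z <= 1 + mu.
Proof. intros H [H1|H1]. lra. pose proof (near1 z). apply Rabs_le_inv in H0. lra. Qed.

Lemma alg_key a b c mu : 0 < mu -> mu <= 1/8 -> Cnorm (Csub c (Cmul a b)) <= mu * mu ->
  dich mu a -> dich mu b -> dich mu c ->
  (Cnorm (Csub C1 c) <= mu <-> Cnorm (Csub C1 a) <= mu /\ Cnorm (Csub C1 b) <= mu).
Proof.
  intros H0 H8 HE Da Db Dc.
  pose proof (dich_bound mu a (Rlt_le _ _ H0) Da) as Ba.
  pose proof (dich_bound mu b (Rlt_le _ _ H0) Db) as Bb.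
  pose proof (near1 c) as Nc. apply Rabs_le_inv in Nc.
  pose proof (Cnorm_nonneg a); pose proof (Cnorm_nonneg b); pose proof (Cnorm_nonneg c).
  assert (Hc : Cnorm c <= mu * mu + Cnorm a * Cnorm b).
  { pose proof (Cnorm_sub_tri c (Cmul a b) C0) as T. replace (Csub c C0) with c in T by Csolve.
    replace (Csub (Cmul a b) C0) with (Cmul a b) in T by Csolve. rewrite Cnorm_mul in T. lra. }
  split.
  - intro HC. split.
    + destruct Da as [Da|Da]; auto. exfalso.
      assert (Cnorm a * Cnorm b <= mu * (1 + mu)) by (apply Rmult_le_compat; lra). nra.
    + destruct Db as [Db|Db]; auto. exfalso.
      assert (Cnorm a * Cnorm b <= (1 + mu) * mu) by (apply Rmult_le_compat; lra). nra.
  - intros [HA HB].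
    assert (H1ab : Cnorm (Csub C1 (Cmul a b)) <= mu + (1 + mu) * mu).
    { replace (Csub C1 (Cmul a b)) with (Cadd (Csub C1 a) (Cmul a (Csub C1 b))) by Csolve.
      eapply Rle_trans. apply Cnorm_triangle. rewrite Cnorm_mul.
      assert (Cnorm a * Cnorm (Csub C1 b) <= (1 + mu) * mu) by (apply Rmult_le_compat; try lra; apply Cnorm_nonneg).
      lra. }
    assert (HC : Cnorm (Csub C1 c) <= mu + (1 + mu) * mu + mu * mu).
    { pose proof (Cnorm_sub_tri C1 (Cmul a b) c) as T. rewrite (Cnorm_sub_sym (Cmul a b) c) in T. lra. }
    destruct Dc as [Dc|Dc]; auto. exfalso. nra.
Qed.

Lemma ac4 {S} (op : S -> S -> S) : is_semilattice S op -> forall a b c d,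
  op (op a b) (op c d) = op (op a c) (op b d).
Proof.
  intros [As [Co _]] a b c d. rewrite <- As, (As b c d), (Co b c), <- (As c b d), As. reflexivity.
Qed.

Lemma build_chi {S} (op : S -> S -> S) (w : S -> R) (Hw : is_weight w)
  (HS : is_semilattice S op) (Hsub : submultiplicative op w) (Hfl : flighty op w) :
  forall eps, 0 < eps -> exists delta, 0 < delta /\ forall u : S -> Cx,
   (forall x y, Cnorm (Csub (u (op x y)) (Cmul (u x) (u y))) <= delta * w x * w y) ->
   exists chi : S -> Cx, (forall s, Cnorm (chi s) <= 1) /\
     (forall x y, chi (op x y) = Cmul (chi x) (chi y)) /\
     (forall s, Cnorm (Csub (u s) (chi s)) <= eps * w s).
Proof.
  intros eps He.
  set (mu := Rmin (1/8) (eps/2)).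
  assert (Hmu0 : 0 < mu) by (unfold mu; apply Rmin_glb_lt; lra).
  assert (Hmu1 : mu <= 1/8) by apply Rmin_l.
  assert (Hmu2 : mu <= eps/2) by apply Rmin_r.
  set (K := 4 / eps). assert (HK : 0 < K) by (unfold K; apply Rdiv_lt_0_compat; lra).
  destruct (Hfl K HK) as [B HB].
  set (B' := Rmax B 1). assert (HB1 : 1 <= B') by apply Rmax_r.
  assert (HBB : forall y, gen op (W_K w K) y -> w y <= B').
  { intros y Hy. eapply Rle_trans. apply HB; auto. apply Rmax_l. }
  set (dlt := Rmin (eps * eps / 8) (mu * mu / (B' * B'))).
  assert (Hd0 : 0 < dlt). { unfold dlt. apply Rmin_glb_lt. nra. apply Rdiv_lt_0_compat; nra. }
  assert (Hd1 : dlt <= eps * eps / 8) by apply Rmin_l.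
  assert (Hd2 : dlt * (B' * B') <= mu * mu).
  { assert (dlt <= mu * mu / (B' * B')) by apply Rmin_r.
    apply Rmult_le_compat_r with (r := B' * B') in H. unfold Rdiv in H.
    rewrite Rmult_assoc, Rinv_l, Rmult_1_r in H by nra. auto. nra. }
  exists dlt. split; auto. intros u Hu.
  pose proof (w_ge1 w Hw op HS Hsub) as W1.
  destruct HS as [HA [HC HI]].
  set (G := gen op (W_K w K)).
  assert (Hg : forall x y, G x -> G y -> Cnorm (Csub (u (op x y)) (Cmul (u x) (u y))) <= mu * mu).
  { intros x y Gx Gy. eapply Rle_trans. apply Hu. pose proof (HBB x Gx); pose proof (HBB y Gy).
    pose proof (W1 x); pose proof (W1 y).
    assert (w x * w y <= B' * B') by (apply Rmult_le_compat; lra).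
    rewrite Rmult_assoc. eapply Rle_trans. apply Rmult_le_compat_l. lra. apply H3. lra. }
  assert (Dch : forall x, G x -> dich mu (u x)).
  { intros x Gx. pose proof (Hg x x Gx Gx). rewrite HI in H.
    replace (Csub (u x) (Cmul (u x) (u x))) with (Cmul (u x) (Csub C1 (u x))) in H by Csolve.
    rewrite Cnorm_mul in H. unfold dich. pose proof (Cnorm_nonneg (u x)). pose proof (Cnorm_nonneg (Csub C1 (u x))).
    destruct (Rle_dec (Cnorm (u x)) mu). left; auto. right. apply Rnot_lt_le. intro. apply n.
    nra. }
  set (Fs := fun x => G x /\ Cnorm (Csub C1 (u x)) <= mu).
  assert (Key : forall x y, G x -> G y -> (Fs (op x y) <-> Fs x /\ Fs y)).
  { intros x y Gx Gy. assert (Gxy : G (op x y)) by (apply gen_mul; auto).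
    pose proof (alg_key (u x) (u y) (u (op x y)) mu Hmu0 Hmu1 (Hg x y Gx Gy) (Dch x Gx) (Dch y Gy) (Dch _ Gxy)).
    unfold Fs. tauto. }
  set (P := fun s => exists y, Fs y /\ op y s = y).
  set (chi := fun s => if excluded_middle_informative (P s) then C1 else C0).
  assert (Pmul : forall s t, P (op s t) <-> P s /\ P t).
  { intros s t. split.
    - intros [y [Fy Ey]]. split.
      + exists y. split; auto. rewrite <- Ey at 1. rewrite <- HA.
        replace (op (op s t) s) with (op s t). auto.
        rewrite (HC (op s t) s), HA, HI. reflexivity.
      + exists y. split; auto. rewrite <- Ey at 1. rewrite <- HA.
        replace (op (op s t) t) with (op s t). auto.
        rewrite <- HA, HI. reflexivity.
    - intros [[y1 [F1 E1]] [y2 [F2 E2]]]. exists (op y1 y2). split.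
      + apply Key. apply F1. apply F2. split; auto.
      + rewrite (ac4 op (conj HA (conj HC HI))). rewrite E1, E2. reflexivity. }
  exists chi. split; [| split].
  - intros s. unfold chi. destruct (excluded_middle_informative (P s)). rewrite Cnorm_C1; lra. rewrite Cnorm_C0; lra.
  - intros s t. unfold chi. pose proof (Pmul s t).
    destruct (excluded_middle_informative (P (op s t))), (excluded_middle_informative (P s)),
      (excluded_middle_informative (P t)); try Csolve; tauto.
  - intros s. pose proof (W1 s). destruct (Rle_dec (w s) K) as [Hs|Hs].
    + assert (Gs : G s) by (apply gen_base; exact Hs).
      destruct (classic (Fs s)) as [Fss|Fss].
      * unfold chi. destruct (excluded_middle_informative (P s)).
        2:{ exfalso. apply n. exists s. split; auto. }
        rewrite Cnorm_sub_sym. destruct Fss. nra.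
      * unfold chi. destruct (excluded_middle_informative (P s)).
        { exfalso. destruct p as [y [Fy Ey]]. apply Fss.
          assert (Fs (op y s)) by (rewrite Ey; auto). apply Key in H0. tauto. apply Fy. auto. }
        destruct (Dch s Gs) as [D|D].
        -- replace (Csub (u s) C0) with (u s) by Csolve. nra.
        -- exfalso. apply Fss. split; auto.
    + assert (Hws : w s > 4 / eps) by (fold K; lra).
      assert (Hew : eps * w s > 4).
      { apply Rmult_gt_compat_l with (r := eps) in Hws; auto. unfold Rdiv in Hws.
        rewrite <- Rmult_assoc, (Rmult_comm eps 4), Rmult_assoc, Rinv_r, Rmult_1_r in Hws by lra. lra. }
      assert (Hu2 : Cnorm (Csub (u s) (Cmul (u s) (u s))) <= dlt * w s * w s).
      { pose proof (Hu s s). rewrite HI in H0. auto. }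
      set (t := Cnorm (u s)). assert (Ht0 : 0 <= t) by apply Cnorm_nonneg.
      assert (Htt : t * t <= dlt * w s * w s + t).
      { pose proof (Cnorm_ge_sub (Cmul (u s) (u s)) (u s)). rewrite Cnorm_mul in H0.
        rewrite Cnorm_sub_sym in H0. fold t in H0. lra. }
      assert (Htb : t <= eps / 2 * w s).
      { apply Rnot_lt_le. intro Hlt.
        assert (t * (eps / 2 * w s) < t * t) by (apply Rmult_lt_compat_l; nra).
        assert (t * (eps * w s / 4) < dlt * w s * w s) by nra.
        assert (dlt * w s * w s <= eps * eps / 8 * w s * w s) by (apply Rmult_le_compat_r; [lra|]; apply Rmult_le_compat_r; lra).
        assert (t * (eps * w s / 4) < eps / 2 * w s * (eps * w s / 4)) by nra.
        apply Rmult_lt_reg_r in H3. lra. nra. }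
      pose proof (Cnorm_sub_le (u s) (chi s)).
      assert (Cnorm (chi s) <= 1). { unfold chi. destruct (excluded_middle_informative (P s)). rewrite Cnorm_C1; lra. rewrite Cnorm_C0; lra. }
      fold t in H0. nra.
Qed.
Theorem theoremt (S : Type) (op : S -> S -> S) (w : S -> R)
  (HS : is_semilattice S op) (Hw : is_weight w) (Hsub : submultiplicative op w)
  (Hfl : flighty op w) :
  AMNM_l1 op w.
Proof.
  intros eps He.
  destruct (build_chi op w Hw HS Hsub Hfl eps He) as [dlt [Hd Hb]].
  exists dlt. split; auto. intros psi Hpsi Hdef.
  destruct (Hb (u w Hw psi) (defect_pt op w Hw psi Hpsi dlt Hdef)) as [chi [H1 [H2 H3]]].
  exists (phi op w Hw HS Hsub chi H1). split.
  - apply phi_mf; auto.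
  - apply phi_dist; auto. lra.
Qed.
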